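(* Let $\Gamma:\mathbb{C}^4\to\mathbb{C}^4$ be a homogeneous polynomial map such that $(x,\Gamma(x))=0$ and $(\Gamma(x),\Gamma(x))=0$ for all $x\in C$. Then there is one of the two generating families $\mathcal P$ of planes in $C$ such that for every nonzero $x\in C$, the vector $\Gamma(x)$ lies in the unique plane of $\mathcal P$ containing $x$.
   Context: $(\cdot,\cdot)$ is the standard Euclidean inner product on $\mathbb{R}^4$ extended complex-bilinearly to $\mathbb{C}^4$, and $C=\{x\in\mathbb{C}^4:(x,x)=0\}$ is the asymptotic cone. The 2-dimensional complex linear subspaces (''planes'') contained in $C$ form two families, the *generating families of planes*: every nonzero $x\in C$ lies in exactly one plane of each family (these correspond to the two rulings of lines of the quadric surface $\mathbb{P}(C)\subset\mathbb{CP}^3$). *)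

(* Defs.v *)
From HB Require Import structures.
From mathcomp Require Import all_boot all_order all_algebra.
From mathcomp Require Import reals complex.
From mathcomp Require Import mpoly.
Set Implicit Arguments. Unset Strict Implicit. Unset Printing Implicit Defensive.
Import Order.TTheory GRing.Theory Num.Theory.
Local Open Scope ring_scope.

(* The standard Euclidean inner product on C^4, extended complex-bilinearly
   (no conjugation): (x, y) = sum_i x_i y_i. *)
Definition bform (R : realType) (x y : 'rV[R[i]]_4) : R[i] :=
  \sum_(k < 4) x 0 k * y 0 k.

Definition in_cone (R : realType) (x : 'rV[R[i]]_4) : Prop := bform x x = 0.

Definition cone_plane (R : realType) (W : 'M[R[i]]_4) : Prop :=
  \rank W = 2%N /\ forall x : 'rV[R[i]]_4, (x <= W)%MS -> in_cone x.

(* The generating family of planes containing the plane P0: planes W in C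
   with dim (W ∩ P0) even (i.e. W = P0 or W ∩ P0 = 0). The two generating
   families are exactly the classes [gen_family P0] as P0 ranges over
   planes in C. *)
Definition gen_family (R : realType) (P0 W : 'M[R[i]]_4) : Prop :=
  cone_plane W /\ ~~ odd (\rank (W :&: P0)%MS).

Definition polymap_eval (R : realType) (G : 'I_4 -> {mpoly R[i][4]})
  (x : 'rV[R[i]]_4) : 'rV[R[i]]_4 :=
  \row_(k < 4) (G k).@[fun j => x 0 j].

(* Main.v *)
Require Import Defs.
From HB Require Import structures.
From mathcomp Require Import all_boot all_order all_algebra.
From mathcomp Require Import reals complex.
From mathcomp Require Import mpoly.
From mathcomp Require Import ring.
From Stdlib Require Import Classical.
Set Implicit Arguments. Unset Strict Implicit. Unset Printing Implicit Defensive.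
Import Order.TTheory GRing.Theory Num.Theory.
Local Open Scope ring_scope.

Notation i0 := (@Ordinal 4 0 isT).
Notation i1 := (@Ordinal 4 1 isT).
Notation i2 := (@Ordinal 4 2 isT).
Notation i3 := (@Ordinal 4 3 isT).

Lemma sum4 (V : nmodType) (F : 'I_4 -> V) : \sum_(k < 4) F k = F i0 + F i1 + F i2 + F i3.
Proof.
rewrite !big_ord_recl big_ord0 addr0 !addrA.
by congr (_ + _ + _ + _); congr F; apply: val_inj.
Qed.

Lemma bformE (R : realType) (x y : 'rV[R[i]]_4) :
  bform x y = x 0 i0 * y 0 i0 + x 0 i1 * y 0 i1 + x 0 i2 * y 0 i2 + x 0 i3 * y 0 i3.
Proof. by rewrite /bform sum4. Qed.

Lemma sqi (R : realType) : 'i%C * 'i%C = -1 :> R[i].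
Proof. by rewrite -expr2 sqr_i. Qed.

Definition pl (R : realType) (x y : 'rV[R[i]]_4) (a b : 'I_4) : R[i] :=
  x 0 a * y 0 b - x 0 b * y 0 a.
Definition epsb (R : realType) (b : bool) : R[i] := if b then 1 else -1.
Definition sf (R : realType) (b : bool) (x y : 'rV[R[i]]_4) (k : nat) : R[i] :=
  match k with
  | 0 => pl x y i0 i1 - epsb R b * pl x y i2 i3
  | 1 => pl x y i0 i2 - epsb R b * pl x y i3 i1
  | _ => pl x y i0 i3 - epsb R b * pl x y i1 i2
  end.
Definition SD (R : realType) (b : bool) (x y : 'rV[R[i]]_4) : bool :=
  [&& sf b x y 0 == 0, sf b x y 1 == 0 & sf b x y 2 == 0].
Lemma idA00 (R : realType) (x N : 'rV[R[i]]_4) :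
  sf true x N 0 * sf false x N 0 = (-1%:R) * bform x N * x 0 i0 * N 0 i0 + (-1%:R) * bform x N * x 0 i1 * N 0 i1 + 1%:R * bform x N * x 0 i2 * N 0 i2 + 1%:R * bform x N * x 0 i3 * N 0 i3 + 1%:R * bform N N * x 0 i0 * x 0 i0 + 1%:R * bform N N * x 0 i1 * x 0 i1 + (-1%:R) * bform x x * N 0 i2 * N 0 i2 + (-1%:R) * bform x x * N 0 i3 * N 0 i3.
Proof. rewrite !bformE /sf /pl /=; ring. Qed.

Lemma idA01 (R : realType) (x N : 'rV[R[i]]_4) :
  sf true x N 0 * sf false x N 1 = (-1%:R) * bform x N * x 0 i0 * N 0 i3 + (-1%:R) * bform x N * x 0 i1 * N 0 i2 + (-1%:R) * bform x N * x 0 i2 * N 0 i1 + (-1%:R) * bform x N * x 0 i3 * N 0 i0 + 1%:R * bform x x * N 0 i0 * N 0 i3 + 1%:R * bform N N * x 0 i0 * x 0 i3 + 1%:R * bform x x * N 0 i1 * N 0 i2 + 1%:R * bform N N * x 0 i1 * x 0 i2.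
Proof. rewrite !bformE /sf /pl /=; ring. Qed.

Lemma idA02 (R : realType) (x N : 'rV[R[i]]_4) :
  sf true x N 0 * sf false x N 2 = 1%:R * bform x N * x 0 i0 * N 0 i2 + (-1%:R) * bform x N * x 0 i1 * N 0 i3 + 1%:R * bform x N * x 0 i2 * N 0 i0 + (-1%:R) * bform x N * x 0 i3 * N 0 i1 + (-1%:R) * bform x x * N 0 i0 * N 0 i2 + (-1%:R) * bform N N * x 0 i0 * x 0 i2 + 1%:R * bform x x * N 0 i1 * N 0 i3 + 1%:R * bform N N * x 0 i1 * x 0 i3.
Proof. rewrite !bformE /sf /pl /=; ring. Qed.

Lemma idA10 (R : realType) (x N : 'rV[R[i]]_4) :
  sf true x N 1 * sf false x N 0 = 1%:R * bform x N * x 0 i0 * N 0 i3 + (-1%:R) * bform x N * x 0 i1 * N 0 i2 + (-1%:R) * bform x N * x 0 i2 * N 0 i1 + 1%:R * bform x N * x 0 i3 * N 0 i0 + (-1%:R) * bform x x * N 0 i0 * N 0 i3 + (-1%:R) * bform N N * x 0 i0 * x 0 i3 + 1%:R * bform x x * N 0 i1 * N 0 i2 + 1%:R * bform N N * x 0 i1 * x 0 i2.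
Proof. rewrite !bformE /sf /pl /=; ring. Qed.

Lemma idA11 (R : realType) (x N : 'rV[R[i]]_4) :
  sf true x N 1 * sf false x N 1 = (-1%:R) * bform x N * x 0 i0 * N 0 i0 + 1%:R * bform x N * x 0 i1 * N 0 i1 + (-1%:R) * bform x N * x 0 i2 * N 0 i2 + 1%:R * bform x N * x 0 i3 * N 0 i3 + 1%:R * bform N N * x 0 i0 * x 0 i0 + (-1%:R) * bform x x * N 0 i1 * N 0 i1 + 1%:R * bform N N * x 0 i2 * x 0 i2 + (-1%:R) * bform x x * N 0 i3 * N 0 i3.
Proof. rewrite !bformE /sf /pl /=; ring. Qed.

Lemma idA12 (R : realType) (x N : 'rV[R[i]]_4) :
  sf true x N 1 * sf false x N 2 = (-1%:R) * bform x N * x 0 i0 * N 0 i1 + (-1%:R) * bform x N * x 0 i1 * N 0 i0 + (-1%:R) * bform x N * x 0 i2 * N 0 i3 + (-1%:R) * bform x N * x 0 i3 * N 0 i2 + 1%:R * bform x x * N 0 i0 * N 0 i1 + 1%:R * bform N N * x 0 i0 * x 0 i1 + 1%:R * bform x x * N 0 i2 * N 0 i3 + 1%:R * bform N N * x 0 i2 * x 0 i3.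
Proof. rewrite !bformE /sf /pl /=; ring. Qed.

Lemma idA20 (R : realType) (x N : 'rV[R[i]]_4) :
  sf true x N 2 * sf false x N 0 = (-1%:R) * bform x N * x 0 i0 * N 0 i2 + (-1%:R) * bform x N * x 0 i1 * N 0 i3 + (-1%:R) * bform x N * x 0 i2 * N 0 i0 + (-1%:R) * bform x N * x 0 i3 * N 0 i1 + 1%:R * bform x x * N 0 i0 * N 0 i2 + 1%:R * bform N N * x 0 i0 * x 0 i2 + 1%:R * bform x x * N 0 i1 * N 0 i3 + 1%:R * bform N N * x 0 i1 * x 0 i3.
Proof. rewrite !bformE /sf /pl /=; ring. Qed.

Lemma idA21 (R : realType) (x N : 'rV[R[i]]_4) :
  sf true x N 2 * sf false x N 1 = 1%:R * bform x N * x 0 i0 * N 0 i1 + 1%:R * bform x N * x 0 i1 * N 0 i0 + (-1%:R) * bform x N * x 0 i2 * N 0 i3 + (-1%:R) * bform x N * x 0 i3 * N 0 i2 + (-1%:R) * bform x x * N 0 i0 * N 0 i1 + (-1%:R) * bform N N * x 0 i0 * x 0 i1 + 1%:R * bform x x * N 0 i2 * N 0 i3 + 1%:R * bform N N * x 0 i2 * x 0 i3.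
Proof. rewrite !bformE /sf /pl /=; ring. Qed.

Lemma idA22 (R : realType) (x N : 'rV[R[i]]_4) :
  sf true x N 2 * sf false x N 2 = (-1%:R) * bform x N * x 0 i0 * N 0 i0 + 1%:R * bform x N * x 0 i1 * N 0 i1 + 1%:R * bform x N * x 0 i2 * N 0 i2 + (-1%:R) * bform x N * x 0 i3 * N 0 i3 + 1%:R * bform x x * N 0 i0 * N 0 i0 + (-1%:R) * bform N N * x 0 i1 * x 0 i1 + (-1%:R) * bform N N * x 0 i2 * x 0 i2 + 1%:R * bform x x * N 0 i3 * N 0 i3.
Proof. rewrite !bformE /sf /pl /=; ring. Qed.

Lemma idPtrue0 (R : realType) (x N y : 'rV[R[i]]_4) :
  2%:R * (x 0 i0 * x 0 i0 * bform N y) = 1%:R * sf true x N 0 * x 0 i0 * y 0 i1 + 1%:R * sf true x y 0 * x 0 i0 * N 0 i1 + (-1%:R) * sf true x N 0 * x 0 i1 * y 0 i0 + 1%:R * sf true x y 0 * x 0 i1 * N 0 i0 + 1%:R * sf true x N 1 * x 0 i0 * y 0 i2 + 1%:R * sf true x y 1 * x 0 i0 * N 0 i2 + (-1%:R) * sf true x N 1 * x 0 i2 * y 0 i0 + 1%:R * sf true x y 1 * x 0 i2 * N 0 i0 + 2%:R * sf true x y 2 * x 0 i0 * N 0 i3 + 1%:R * sf true x N 2 * x 0 i1 * y 0 i2 + (-1%:R) * sf true x y 2 * x 0 i1 * N 0 i2 + (-1%:R) * sf true x N 2 * x 0 i2 * y 0 i1 + 1%:R * sf true x y 2 * x 0 i2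 * N 0 i1 + 2%:R * bform x N * x 0 i0 * y 0 i0.
Proof. rewrite !bformE /sf /pl /=; ring. Qed.

Lemma idPtrue1 (R : realType) (x N y : 'rV[R[i]]_4) :
  2%:R * (x 0 i1 * x 0 i1 * bform N y) = 1%:R * sf true x N 0 * x 0 i0 * y 0 i1 + (-1%:R) * sf true x y 0 * x 0 i0 * N 0 i1 + (-1%:R) * sf true x N 0 * x 0 i1 * y 0 i0 + (-1%:R) * sf true x y 0 * x 0 i1 * N 0 i0 + (-1%:R) * sf true x N 1 * x 0 i0 * y 0 i2 + 1%:R * sf true x y 1 * x 0 i0 * N 0 i2 + 2%:R * sf true x y 1 * x 0 i1 * N 0 i3 + 1%:R * sf true x N 1 * x 0 i2 * y 0 i0 + (-1%:R) * sf true x y 1 * x 0 i2 * N 0 i0 + (-1%:R) * sf true x N 2 * x 0 i1 * y 0 i2 + (-1%:R) * sf true x y 2 * x 0 i1 * N 0 i2 + 1%:R * sf true x N 2 * x 0 i2 * y 0 i1 + (-1%:R) * sf true x y 2 * x 0 i2 * N 0 i1 + 2%:R * bform x N * x 0 i1 * y 0 i1.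
Proof. rewrite !bformE /sf /pl /=; ring. Qed.

Lemma idPtrue2 (R : realType) (x N y : 'rV[R[i]]_4) :
  2%:R * (x 0 i2 * x 0 i2 * bform N y) = (-1%:R) * sf true x N 0 * x 0 i0 * y 0 i1 + 1%:R * sf true x y 0 * x 0 i0 * N 0 i1 + 1%:R * sf true x N 0 * x 0 i1 * y 0 i0 + (-1%:R) * sf true x y 0 * x 0 i1 * N 0 i0 + (-2%:R) * sf true x y 0 * x 0 i2 * N 0 i3 + 1%:R * sf true x N 1 * x 0 i0 * y 0 i2 + (-1%:R) * sf true x y 1 * x 0 i0 * N 0 i2 + (-1%:R) * sf true x N 1 * x 0 i2 * y 0 i0 + (-1%:R) * sf true x y 1 * x 0 i2 * N 0 i0 + (-1%:R) * sf true x N 2 * x 0 i1 * y 0 i2 + 1%:R * sf true x y 2 * x 0 i1 * N 0 i2 + 1%:R * sf true x N 2 * x 0 i2 * y 0 i1 + 1%:R * sf true x y 2 * x 0 i2 * N 0 i1 + 2%:R * bform x N * x 0 i2 * y 0 i2.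
Proof. rewrite !bformE /sf /pl /=; ring. Qed.

Lemma idPtrue3 (R : realType) (x N y : 'rV[R[i]]_4) :
  2%:R * (x 0 i3 * x 0 i3 * bform N y) = 1%:R * sf true x N 0 * x 0 i0 * y 0 i1 + (-1%:R) * sf true x y 0 * x 0 i0 * N 0 i1 + (-1%:R) * sf true x N 0 * x 0 i1 * y 0 i0 + 1%:R * sf true x y 0 * x 0 i1 * N 0 i0 + (-2%:R) * sf true x N 0 * x 0 i2 * y 0 i3 + 2%:R * sf true x y 0 * x 0 i2 * N 0 i3 + 2%:R * sf true x N 0 * x 0 i3 * y 0 i2 + 1%:R * sf true x N 1 * x 0 i0 * y 0 i2 + (-1%:R) * sf true x y 1 * x 0 i0 * N 0 i2 + 2%:R * sf true x N 1 * x 0 i1 * y 0 i3 + (-2%:R) * sf true x y 1 * x 0 i1 * N 0 i3 + (-1%:R) * sf true x N 1 * x 0 i2 * y 0 i0 + 1%:R * sf true x y 1 * x 0 i2 * N 0 i0 + (-2%:R) * sf true x N 1 * x 0 i3 * y 0 i1 + 2%:R * sf true x N 2 * x 0 i0 * y 0 i3 + (-2%:R) * sf true x y 2 * x 0 i0 * N 0 i3 + (-1%:R) * sf true x N 2 * x 0 i1 * y 0 i2 + 1%:R * sf true x y 2 * x 0 i1 * N 0 i2 + 1%:R * sf true x N 2 * x 0 i2 * y 0 i1 + (-1%:R) * sf true x y 2 * x 0 i2 * N 0 i1 + (-2%:R) * sf true x N 2 * x 0 i3 * y 0 i0 + 2%:R * bform x N * x 0 i3 * y 0 i3.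
Proof. rewrite !bformE /sf /pl /=; ring. Qed.

Lemma idPfalse0 (R : realType) (x N y : 'rV[R[i]]_4) :
  2%:R * (x 0 i0 * x 0 i0 * bform N y) = 1%:R * sf false x N 0 * x 0 i0 * y 0 i1 + 1%:R * sf false x y 0 * x 0 i0 * N 0 i1 + (-1%:R) * sf false x N 0 * x 0 i1 * y 0 i0 + 1%:R * sf false x y 0 * x 0 i1 * N 0 i0 + 1%:R * sf false x N 1 * x 0 i0 * y 0 i2 + 1%:R * sf false x y 1 * x 0 i0 * N 0 i2 + (-1%:R) * sf false x N 1 * x 0 i2 * y 0 i0 + 1%:R * sf false x y 1 * x 0 i2 * N 0 i0 + 2%:R * sf false x y 2 * x 0 i0 * N 0 i3 + (-1%:R) * sf false x N 2 * x 0 i1 * y 0 i2 + 1%:R * sf false x y 2 * x 0 i1 * N 0 i2 + 1%:R * sf false x N 2 * x 0 i2 * y 0 i1 + (-1%:R) * sf false x y 2 * x 0 i2 * N 0 i1 + 2%:R * bform x N * x 0 i0 * y 0 i0.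
Proof. rewrite !bformE /sf /pl /=; ring. Qed.

Lemma idPfalse1 (R : realType) (x N y : 'rV[R[i]]_4) :
  2%:R * (x 0 i1 * x 0 i1 * bform N y) = 1%:R * sf false x N 0 * x 0 i0 * y 0 i1 + (-1%:R) * sf false x y 0 * x 0 i0 * N 0 i1 + (-1%:R) * sf false x N 0 * x 0 i1 * y 0 i0 + (-1%:R) * sf false x y 0 * x 0 i1 * N 0 i0 + (-1%:R) * sf false x N 1 * x 0 i0 * y 0 i2 + 1%:R * sf false x y 1 * x 0 i0 * N 0 i2 + (-2%:R) * sf false x y 1 * x 0 i1 * N 0 i3 + 1%:R * sf false x N 1 * x 0 i2 * y 0 i0 + (-1%:R) * sf false x y 1 * x 0 i2 * N 0 i0 + 1%:R * sf false x N 2 * x 0 i1 * y 0 i2 + 1%:R * sf false x y 2 * x 0 i1 * N 0 i2 + (-1%:R) * sf false x N 2 * x 0 i2 * y 0 i1 + 1%:R * sf false x y 2 * x 0 i2 * N 0 i1 + 2%:R * bform x N * x 0 i1 * y 0 i1.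
Proof. rewrite !bformE /sf /pl /=; ring. Qed.

Lemma idPfalse2 (R : realType) (x N y : 'rV[R[i]]_4) :
  2%:R * (x 0 i2 * x 0 i2 * bform N y) = (-1%:R) * sf false x N 0 * x 0 i0 * y 0 i1 + 1%:R * sf false x y 0 * x 0 i0 * N 0 i1 + 1%:R * sf false x N 0 * x 0 i1 * y 0 i0 + (-1%:R) * sf false x y 0 * x 0 i1 * N 0 i0 + 2%:R * sf false x y 0 * x 0 i2 * N 0 i3 + 1%:R * sf false x N 1 * x 0 i0 * y 0 i2 + (-1%:R) * sf false x y 1 * x 0 i0 * N 0 i2 + (-1%:R) * sf false x N 1 * x 0 i2 * y 0 i0 + (-1%:R) * sf false x y 1 * x 0 i2 * N 0 i0 + 1%:R * sf false x N 2 * x 0 i1 * y 0 i2 + (-1%:R) * sf false x y 2 * x 0 i1 * N 0 i2 + (-1%:R) * sf false x N 2 * x 0 i2 * y 0 i1 + (-1%:R) * sf false x y 2 * x 0 i2 * N 0 i1 + 2%:R * bform x N * x 0 i2 * y 0 i2.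
Proof. rewrite !bformE /sf /pl /=; ring. Qed.

Lemma idPfalse3 (R : realType) (x N y : 'rV[R[i]]_4) :
  2%:R * (x 0 i3 * x 0 i3 * bform N y) = 1%:R * sf false x N 0 * x 0 i0 * y 0 i1 + (-1%:R) * sf false x y 0 * x 0 i0 * N 0 i1 + (-1%:R) * sf false x N 0 * x 0 i1 * y 0 i0 + 1%:R * sf false x y 0 * x 0 i1 * N 0 i0 + 2%:R * sf false x N 0 * x 0 i2 * y 0 i3 + (-2%:R) * sf false x y 0 * x 0 i2 * N 0 i3 + (-2%:R) * sf false x N 0 * x 0 i3 * y 0 i2 + 1%:R * sf false x N 1 * x 0 i0 * y 0 i2 + (-1%:R) * sf false x y 1 * x 0 i0 * N 0 i2 + (-2%:R) * sf false x N 1 * x 0 i1 * y 0 i3 + 2%:R * sf false x y 1 * x 0 i1 * N 0 i3 + (-1%:R) * sf false x N 1 * x 0 i2 * y 0 i0 + 1%:R * sf false x y 1 * x 0 i2 * N 0 i0 + 2%:R * sf false x N 1 * x 0 i3 * y 0 i1 + 2%:R * sf false x N 2 * x 0 i0 * y 0 i3 + (-2%:R) * sf false x y 2 * x 0 i0 * N 0 i3 + 1%:R * sf false x N 2 * x 0 i1 * y 0 i2 + (-1%:R) * sf false x y 2 * x 0 i1 * N 0 i2 + (-1%:R) * sf false x N 2 * x 0 i2 * y 0 i1 + 1%:R * sf false x y 2 * x 0 i2 * N 0 i1 + (-2%:R) * sf false x N 2 * x 0 i3 * y 0 i0 + 2%:R * bform x N * x 0 i3 * y 0 i3.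
Proof. rewrite !bformE /sf /pl /=; ring. Qed.

Lemma ord4 (k : 'I_4) : k = i0 \/ k = i1 \/ k = i2 \/ k = i3.
Proof.
case: k => [[|[|[|[|m]]]] hk].
- by left; apply: val_inj.
- by right; left; apply: val_inj.
- by right; right; left; apply: val_inj.
- by right; right; right; apply: val_inj.
- by [].
Qed.

Lemma bformC (R : realType) (x y : 'rV[R[i]]_4) : bform x y = bform y x.
Proof. rewrite !bformE; ring. Qed.

Lemma bformDl (R : realType) (a c : R[i]) (x y z : 'rV[R[i]]_4) :
  bform (a *: x + c *: y) z = a * bform x z + c * bform y z.
Proof. rewrite !bformE !mxE; ring. Qed.

Lemma bformDr (R : realType) (a c : R[i]) (x y z : 'rV[R[i]]_4) :
  bform z (a *: x + c *: y) = a * bform z x + c * bform z y.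
Proof. by rewrite bformC bformDl !(bformC z). Qed.

Lemma two_neq0 (R : realType) : (2%:R : R[i]) != 0.
Proof. by rewrite pnatr_eq0. Qed.

Lemma sub_adds_rV (R : realType) (w u v : 'rV[R[i]]_4) :
  (w <= u + v)%MS -> exists a c : R[i], w = a *: u + c *: v.
Proof.
case/sub_addsmxP => [[D1 D2]] /= ->.
exists (D1 0 0), (D2 0 0).
by rewrite {1}(mx11_scalar D1) {1}(mx11_scalar D2) !mul_scalar_mx.
Qed.

Lemma cone_polar (R : realType) (W : 'M[R[i]]_4) (u v : 'rV[R[i]]_4) :
  cone_plane W -> (u <= W)%MS -> (v <= W)%MS -> bform u v = 0.
Proof.
move=> [_ hW] hu hv.
have huv : ((u + v)%R <= W)%MS by rewrite addmx_sub.
have := hW _ huv; have := hW _ hu; have := hW _ hv; rewrite /in_cone.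
have -> : bform (u + v) (u + v) = bform u u + 2%:R * bform u v + bform v v.
  rewrite !bformE !mxE; ring.
move=> -> -> /eqP; rewrite addr0 add0r mulf_eq0 (negPf (two_neq0 R)) /=.
by move/eqP.
Qed.

Lemma rank_ge (R : realType) (A B : 'M[R[i]]_4) :
  (A <= B)%MS -> (\rank B <= \rank A)%N -> (B <= A)%MS.
Proof.
move=> sAB hr; rewrite -(mxrank_leqif_sup sAB).2.
by rewrite eqn_leq hr mxrankS.
Qed.

Lemma perp_sub (R : realType) (W : 'M[R[i]]_4) (z : 'rV[R[i]]_4) :
  cone_plane W -> (forall w, (w <= W)%MS -> bform z w = 0) -> (z <= W)%MS.
Proof.
move=> hW hz.
have hK : (W <= kermx W^T)%MS.
  rewrite sub_kermx; apply/eqP/matrixP => i j; rewrite !mxE.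
  transitivity (bform (row i W) (row j W)); last first.
    exact: (cone_polar hW (row_sub i W) (row_sub j W)).
  by rewrite /bform; apply: eq_bigr => k _; rewrite !mxE.
have hr : \rank (kermx W^T) = 2%N by rewrite mxrank_ker mxrank_tr hW.1.
have hKW : (kermx W^T <= W)%MS by apply: rank_ge => //; rewrite hr hW.1.
apply: submx_trans hKW; rewrite sub_kermx; apply/eqP/matrixP => i j.
rewrite ord1 !mxE; transitivity (bform z (row j W)); last exact: hz (row_sub j W).
by rewrite /bform; apply: eq_bigr => k _; rewrite !mxE.
Qed.

Lemma rank2 (R : realType) (x y : 'rV[R[i]]_4) :
  x != 0 -> ~~ (y <= x)%MS -> \rank (x + y)%MS = 2%N.
Proof.
move=> hx hy; apply/eqP; rewrite eqn_leq; apply/andP; split.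
  apply: leq_trans (mxrank_adds_leqif x y).1 _.
  by rewrite !rank_rV; case: (x != 0); case: (y != 0).
have hlt : (x < x + y)%MS.
  rewrite ltmxE addsmxSl /=; apply: contra hy => h.
  exact: submx_trans (addsmxSr x y) h.
have := rank_ltmx hlt; by rewrite rank_rV hx.
Qed.

Lemma span2 (R : realType) (W : 'M[R[i]]_4) (x : 'rV[R[i]]_4) :
  \rank W = 2%N -> (x <= W)%MS -> x != 0 ->
  exists y, [/\ (y <= W)%MS, ~~ (y <= x)%MS &
    forall w, (w <= W)%MS -> exists a c : R[i], w = a *: x + c *: y].
Proof.
move=> hW hx hx0.
have : ~~ (W <= x)%MS.
  apply/negP => h; have := mxrankS h; rewrite hW rank_rV hx0 //.
case/row_subPn => i hi; exists (row i W); split => //; first exact: row_sub.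
move=> w hw; apply: sub_adds_rV.
have hsub : (x + row i W <= W)%MS by rewrite addsmx_sub hx row_sub.
have hWs : (W <= x + row i W)%MS by apply: rank_ge => //; rewrite rank2 ?hW.
exact: submx_trans hWs.
Qed.

Lemma rV_neq0 (R : realType) (x : 'rV[R[i]]_4) : x != 0 -> exists k, x 0 k != 0.
Proof.
move=> hx; apply/existsP; apply: contraNT hx => /existsPn h.
apply/eqP/matrixP => i j; rewrite ord1 mxE; exact/eqP/negPn/h.
Qed.

Lemma prodA (R : realType) (x N : 'rV[R[i]]_4) :
  bform x x = 0 -> bform N N = 0 -> bform x N = 0 ->
  forall k l, sf true x N k * sf false x N l = 0.
Proof.
move=> h1 h2 h3 k l.
case: k => [|[|k]]; case: l => [|[|l]].
- by rewrite idA00 h1 h2 h3; ring.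
- by rewrite idA01 h1 h2 h3; ring.
- by change (sf true x N 0 * sf false x N 2 = 0); rewrite idA02 h1 h2 h3; ring.
- by rewrite idA10 h1 h2 h3; ring.
- by rewrite idA11 h1 h2 h3; ring.
- by change (sf true x N 1 * sf false x N 2 = 0); rewrite idA12 h1 h2 h3; ring.
- by change (sf true x N 2 * sf false x N 0 = 0); rewrite idA20 h1 h2 h3; ring.
- by change (sf true x N 2 * sf false x N 1 = 0); rewrite idA21 h1 h2 h3; ring.
- by change (sf true x N 2 * sf false x N 2 = 0); rewrite idA22 h1 h2 h3; ring.
Qed.

Lemma lemA (R : realType) (x N : 'rV[R[i]]_4) :
  bform x x = 0 -> bform N N = 0 -> bform x N = 0 ->
  SD true x N || SD false x N.
Proof.
move=> h1 h2 h3; have P := prodA h1 h2 h3.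
have := P 0%N 0%N; have := P 0%N 1%N; have := P 0%N 2%N;
have := P 1%N 0%N; have := P 1%N 1%N; have := P 1%N 2%N;
have := P 2%N 0%N; have := P 2%N 1%N; have := P 2%N 2%N.
rewrite /SD; move=> /eqP; rewrite mulf_eq0; move=> + /eqP; rewrite mulf_eq0;
move=> + + /eqP; rewrite mulf_eq0; move=> + + + /eqP; rewrite mulf_eq0;
move=> + + + + /eqP; rewrite mulf_eq0; move=> + + + + + /eqP; rewrite mulf_eq0;
move=> + + + + + + /eqP; rewrite mulf_eq0; move=> + + + + + + + /eqP; rewrite mulf_eq0;
move=> + + + + + + + + /eqP; rewrite mulf_eq0.
by case: (sf true x N 0 == 0); case: (sf true x N 1 == 0); case: (sf true x N 2 == 0);
   case: (sf false x N 0 == 0); case: (sf false x N 1 == 0); case: (sf false x N 2 == 0).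
Qed.

Lemma sf_lin (R : realType) (b : bool) (a c a' c' : R[i]) (x y : 'rV[R[i]]_4) k :
  sf b (a *: x + c *: y) (a' *: x + c' *: y) k = (a * c' - c * a') * sf b x y k.
Proof. rewrite /sf /pl !mxE; case: k => [|[|k]]; ring. Qed.

Lemma idP_all (R : realType) (b : bool) (x N y : 'rV[R[i]]_4) (k : 'I_4) :
  SD b x N -> SD b x y -> bform x N = 0 -> x 0 k * x 0 k * bform N y = 0.
Proof.
case/and3P => /eqP a0 /eqP a1 /eqP a2; case/and3P => /eqP b0 /eqP b1 /eqP b2 h.
suff : 2%:R * (x 0 k * x 0 k * bform N y) = 0.
  by move/eqP; rewrite mulf_eq0 (negPf (two_neq0 R)) => /eqP.
case: b a0 a1 a2 b0 b1 b2 => a0 a1 a2 b0 b1 b2;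
have [->|[->|[->|->]]] := ord4 k.
- by rewrite idPtrue0 a0 a1 a2 b0 b1 b2 h; ring.
- by rewrite idPtrue1 a0 a1 a2 b0 b1 b2 h; ring.
- by rewrite idPtrue2 a0 a1 a2 b0 b1 b2 h; ring.
- by rewrite idPtrue3 a0 a1 a2 b0 b1 b2 h; ring.
- by rewrite idPfalse0 a0 a1 a2 b0 b1 b2 h; ring.
- by rewrite idPfalse1 a0 a1 a2 b0 b1 b2 h; ring.
- by rewrite idPfalse2 a0 a1 a2 b0 b1 b2 h; ring.
- by rewrite idPfalse3 a0 a1 a2 b0 b1 b2 h; ring.
Qed.

Definition p1 (R : realType) : 'rV[R[i]]_4 := \row_(k < 4) [:: 1; 'i%C; 0; 0]`_k.
Definition p2 (R : realType) (b : bool) : 'rV[R[i]]_4 :=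
  \row_(k < 4) [:: 0; 0; 1; epsb R b * 'i%C]`_k.
Definition P0 (R : realType) (b : bool) : 'M[R[i]]_4 := (p1 R + p2 R b)%MS.

Lemma cone_P0 (R : realType) (b : bool) : cone_plane (P0 R b).
Proof.
split.
  rewrite /P0; apply: rank2.
    apply/eqP => /matrixP /(_ 0 i0); rewrite !mxE /=; apply/eqP; exact: oner_neq0.
  apply/negP => /sub_rVP [a] /matrixP /(_ 0 i2); rewrite !mxE /= mulr0.
  apply/eqP; exact: oner_neq0.
move=> w /sub_adds_rV [a [c ->]]; rewrite /in_cone bformE !mxE /=.
transitivity ((a * a + c * c) * ('i%C * 'i%C + 1)).
  by case: b; rewrite /epsb; ring.
by rewrite sqi addNr mulr0.
Qed.

Lemma sf_P0 (R : realType) (b : bool) k : sf b (p1 R) (p2 R b) k = 0.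
Proof.
rewrite /sf /pl !mxE /=; case: k => [|[|k]].
- ring.
- transitivity ('i%C * 'i%C + 1 : R[i]); first by case: b; rewrite /epsb; ring.
  by rewrite sqi addNr.
- by case: b; rewrite /epsb; ring.
Qed.

Lemma Dident (R : realType) (b : bool) (x y : 'rV[R[i]]_4) :
  bform x (p1 R) * bform y (p2 R b) - bform y (p1 R) * bform x (p2 R b) =
  sf (~~ b) x y 1 + 'i%C * epsb R b * sf (~~ b) x y 2.
Proof.
rewrite !bformE !mxE /=.
transitivity (sf (~~ b) x y 1 + 'i%C * epsb R b * sf (~~ b) x y 2 +
   epsb R b * pl x y i1 i3 * ('i%C * 'i%C + 1)).
  by case: b; rewrite /sf /pl /epsb /=; ring.
by rewrite sqi addNr mulr0 addr0.
Qed.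

Lemma plane_main (R : realType) (b : bool) (W : 'M[R[i]]_4) (x N : 'rV[R[i]]_4) :
  cone_plane W -> (x <= W)%MS -> x != 0 -> bform x N = 0 -> SD b x N ->
  ~~ odd (\rank (W :&: P0 R b)%MS) -> (N <= W)%MS.
Proof.
move=> hW hxW hx0 hxN hSD hodd.
have [y [hyW hyx hsp]] := span2 hW.1 hxW hx0.
have hxx : bform x x = 0 := hW.2 x hxW.
have hyy : bform y y = 0 := hW.2 y hyW.
have hxy := cone_polar hW hxW hyW.
case hb: (SD b x y).
  apply: perp_sub hW _ => w hw; have [a [c ->]] := hsp w hw; rewrite bformDr.
  have [k hk] := rV_neq0 hx0; have := idP_all k hSD hb hxN.
  move/eqP; rewrite !mulf_eq0 (negPf hk) /= => /eqP ->.
  rewrite bformC hxN; ring.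
exfalso.
have hnb : SD (~~ b) x y.
  by move: (lemA hxx hyy hxy); case: b hSD hodd hb => _ _ hb' /orP [h|h] //; rewrite h in hb'.
have hr2 : (\rank (W :&: P0 R b)%MS <= 2)%N.
  by apply: leq_trans (mxrankS (capmxSl W (P0 R b))) _; rewrite hW.1.
have : (\rank (W :&: P0 R b)%MS == 0%N) || (\rank (W :&: P0 R b)%MS == 2%N).
  by move: hr2 hodd; case: (\rank _) => [|[|[|r]]].
case/orP => /eqP hr.
  set A1 := bform x (p1 R); set B1 := bform y (p1 R).
  set A2 := bform x (p2 R b); set B2 := bform y (p2 R b).
  have hD : A1 * B2 - B1 * A2 = 0.
    rewrite /A1 /B1 /A2 /B2 Dident.
    by case/and3P: hnb => _ /eqP -> /eqP ->; ring.
  have [al [be [hab e1 e2]]] : exists al be : R[i],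
      [/\ (al != 0) || (be != 0), al * A1 + be * B1 = 0 & al * A2 + be * B2 = 0].
    case: (boolP ((A1 != 0) || (B1 != 0))) => h1.
      exists B1, (- A1); split.
      - by rewrite oppr_eq0 orbC.
      - ring.
      - transitivity (- (A1 * B2 - B1 * A2)); first ring.
        by rewrite hD oppr0.
    move: h1; rewrite negb_or !negbK => /andP [/eqP a1 /eqP b1].
    case: (boolP ((A2 != 0) || (B2 != 0))) => h2.
      exists B2, (- A2); split.
      - by rewrite oppr_eq0 orbC.
      - rewrite a1 b1; ring.
      - ring.
    exists 1, 0; split.
    - by rewrite oner_neq0.
    - rewrite a1 b1; ring.
    - move: h2; rewrite negb_or !negbK => /andP [/eqP -> /eqP ->]; ring.
  set z := al *: x + be *: y.
  have hz0 : z != 0.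
    apply/negP => /eqP hz.
    case: (boolP (be != 0)) => hbe.
      apply: (negP hyx); apply/sub_rVP; exists (- (al / be)).
      apply/rowP => k; have := congr1 (fun m : 'rV[R[i]]_4 => m 0 k) hz; rewrite /z !mxE => e.
      have -> : y 0 k = (be * y 0 k) / be by field.
      have -> : be * y 0 k = - (al * x 0 k) by apply/eqP; rewrite -subr_eq0 opprK addrC e.
      field.
      exact: hbe.
    move: hbe; rewrite negbK => /eqP hbe.
    move: hab; rewrite hbe eqxx orbF => hal.
    move: hz; rewrite /z hbe scale0r addr0 => /eqP; rewrite scaler_eq0 (negbTE hal) /=.
    by apply/negP.
  have hzW : (z <= W)%MS by rewrite addmx_sub ?scalemx_sub.
  have hzP : (z <= P0 R b)%MS.
    apply: perp_sub (cone_P0 R b) _ => w /sub_adds_rV [a [c ->]].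
    rewrite bformDr /z !bformDl -/A1 -/B1 -/A2 -/B2 e1 e2; ring.
  have hzc : (z <= W :&: P0 R b)%MS by rewrite sub_capmx hzW hzP.
  by have := mxrankS hzc; rewrite hr rank_rV hz0.
have hWP : (W <= P0 R b)%MS.
  apply: submx_trans (capmxSr W (P0 R b)).
  by apply: rank_ge; [exact: capmxSl | rewrite hr hW.1].
have [a [c ex]] := sub_adds_rV (submx_trans hxW hWP).
have [a' [c' ey]] := sub_adds_rV (submx_trans hyW hWP).
move: hb; rewrite /SD ex ey !sf_lin !sf_P0 !mulr0 eqxx //.
Qed.

Definition Xof (R : realType) (u1 u2 v1 v2 : R[i]) : 'rV[R[i]]_4 :=
  \row_(k < 4) [:: (u1 * v1 + u2 * v2) / 2%:R; (u1 * v1 - u2 * v2) / (2%:R * 'i%C);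
                   (u1 * v2 - u2 * v1) / 2%:R; (u1 * v2 + u2 * v1) / (2%:R * 'i%C)]`_k.

Lemma two_i_neq0 (R : realType) : (2%:R * 'i%C : R[i]) != 0.
Proof. by rewrite mulf_neq0 ?two_neq0 ?neq0Ci. Qed.

Lemma Xof_eq (R : realType) (x : 'rV[R[i]]_4) (u1 u2 v1 v2 : R[i]) :
  u1 * v1 = x 0 i0 + 'i%C * x 0 i1 -> u2 * v2 = x 0 i0 - 'i%C * x 0 i1 ->
  u1 * v2 = x 0 i2 + 'i%C * x 0 i3 -> u2 * v1 = - (x 0 i2 - 'i%C * x 0 i3) ->
  Xof u1 u2 v1 v2 = x.
Proof.
move=> e1 e2 e3 e4; apply/rowP => k; rewrite mxE.
have h2 := two_neq0 R; have hi := neq0Ci R[i].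
have [->|[->|[->|->]]] := ord4 k; rewrite /= ?e1 ?e2 ?e3 ?e4; field; by rewrite ?h2 ?hi.
Qed.

Lemma detM (R : realType) (x : 'rV[R[i]]_4) :
  (x 0 i0 + 'i%C * x 0 i1) * (x 0 i0 - 'i%C * x 0 i1) +
  (x 0 i2 + 'i%C * x 0 i3) * (x 0 i2 - 'i%C * x 0 i3) = bform x x.
Proof.
rewrite bformE.
transitivity (x 0 i0 * x 0 i0 + x 0 i1 * x 0 i1 + x 0 i2 * x 0 i2 + x 0 i3 * x 0 i3
   - ('i%C * 'i%C + 1) * (x 0 i1 * x 0 i1 + x 0 i3 * x 0 i3)); first ring.
by rewrite sqi addNr mul0r subr0.
Qed.

Lemma Xof_cone (R : realType) (u1 u2 v1 v2 : R[i]) : in_cone (Xof u1 u2 v1 v2).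
Proof.
rewrite /in_cone -detM.
have h2 := two_neq0 R; have hi := neq0Ci R[i].
rewrite !mxE /=.
have -> : (u1 * v1 + u2 * v2) / 2%:R + 'i%C * ((u1 * v1 - u2 * v2) / (2%:R * 'i%C)) = u1 * v1.
  by field; rewrite ?h2 ?hi.
have -> : (u1 * v1 + u2 * v2) / 2%:R - 'i%C * ((u1 * v1 - u2 * v2) / (2%:R * 'i%C)) = u2 * v2.
  by field; rewrite ?h2 ?hi.
have -> : (u1 * v2 - u2 * v1) / 2%:R + 'i%C * ((u1 * v2 + u2 * v1) / (2%:R * 'i%C)) = u1 * v2.
  by field; rewrite ?h2 ?hi.
have -> : (u1 * v2 - u2 * v1) / 2%:R - 'i%C * ((u1 * v2 + u2 * v1) / (2%:R * 'i%C)) = - (u2 * v1).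
  by field; rewrite ?h2 ?hi.
ring.
Qed.

Lemma factor (R : realType) (x : 'rV[R[i]]_4) :
  in_cone x -> exists u1 u2 v1 v2 : R[i], x = Xof u1 u2 v1 v2.
Proof.
rewrite /in_cone -detM => hdet.
have hd : (x 0 i0 + 'i%C * x 0 i1) * (x 0 i0 - 'i%C * x 0 i1) =
          (x 0 i2 + 'i%C * x 0 i3) * (- (x 0 i2 - 'i%C * x 0 i3)).
  by apply/eqP; rewrite -subr_eq0 mulrN opprK hdet.
case: (eqVneq (x 0 i0 + 'i%C * x 0 i1) 0) => ha.
  case: (eqVneq (x 0 i2 + 'i%C * x 0 i3) 0) => hc.
    exists 0, 1, (- (x 0 i2 - 'i%C * x 0 i3)), (x 0 i0 - 'i%C * x 0 i1).
    by symmetry; apply: Xof_eq; rewrite ?ha ?hc; ring.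
  have he : - (x 0 i2 - 'i%C * x 0 i3) = 0.
    by move: hd; rewrite ha mul0r => /esym /eqP; rewrite mulf_eq0 (negPf hc) => /eqP.
  exists (x 0 i2 + 'i%C * x 0 i3), (x 0 i0 - 'i%C * x 0 i1), 0, 1.
  by symmetry; apply: Xof_eq; rewrite ?ha ?he; ring.
exists (x 0 i0 + 'i%C * x 0 i1), (- (x 0 i2 - 'i%C * x 0 i3)), 1,
       ((x 0 i2 + 'i%C * x 0 i3) / (x 0 i0 + 'i%C * x 0 i1)).
symmetry; apply: Xof_eq.
- by rewrite mulr1.
- transitivity ((x 0 i2 + 'i%C * x 0 i3) * (- (x 0 i2 - 'i%C * x 0 i3)) /
                (x 0 i0 + 'i%C * x 0 i1)); first by field; exact: ha.
  by rewrite -hd; field; exact: ha.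
- field; exact: ha.
- by rewrite mulr1.
Qed.

Definition polyfun (R : realType) (f : R[i] -> R[i]) :=
  exists q : {poly R[i]}, forall t, f t = q.[t].

Lemma pf_const (R : realType) (c : R[i]) : polyfun (fun _ => c).
Proof. by exists c%:P => t; rewrite hornerC. Qed.
Lemma pf_id (R : realType) : polyfun (fun t : R[i] => t).
Proof. by exists 'X => t; rewrite hornerX. Qed.
Lemma pf_add (R : realType) (f g : R[i] -> R[i]) :
  polyfun f -> polyfun g -> polyfun (fun t => f t + g t).
Proof. by move=> [p hp] [q hq]; exists (p + q) => t; rewrite hornerD hp hq. Qed.
Lemma pf_opp (R : realType) (f : R[i] -> R[i]) :
  polyfun f -> polyfun (fun t => - f t).
Proof. by move=> [p hp]; exists (- p) => t; rewrite hornerN hp. Qed.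
Lemma pf_mul (R : realType) (f g : R[i] -> R[i]) :
  polyfun f -> polyfun g -> polyfun (fun t => f t * g t).
Proof. by move=> [p hp] [q hq]; exists (p * q) => t; rewrite hornerM hp hq. Qed.
Lemma pf_exp (R : realType) (f : R[i] -> R[i]) n :
  polyfun f -> polyfun (fun t => f t ^+ n).
Proof. by move=> [p hp]; exists (p ^+ n) => t; rewrite horner_exp hp. Qed.
Lemma pf_ext (R : realType) (f g : R[i] -> R[i]) :
  (forall t, f t = g t) -> polyfun f -> polyfun g.
Proof. by move=> e [p hp]; exists p => t; rewrite -e hp. Qed.

Lemma pf_sum (R : realType) (I : Type) (r : seq I) (P : pred I) (F : I -> R[i] -> R[i]) :
  (forall i, polyfun (F i)) -> polyfun (fun t => \sum_(i <- r | P i) F i t).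
Proof.
move=> hF; elim: r => [|a r IH].
  by apply: (pf_ext (f := fun _ => 0)); [move=> t; rewrite big_nil | exact: pf_const].
case: (boolP (P a)) => hP.
  by apply: (pf_ext _ (pf_add (hF a) IH)) => t /=; rewrite big_cons hP.
by apply: (pf_ext _ IH) => t; rewrite big_cons (negPf hP).
Qed.

Lemma pf_prod (R : realType) (I : Type) (r : seq I) (P : pred I) (F : I -> R[i] -> R[i]) :
  (forall i, polyfun (F i)) -> polyfun (fun t => \prod_(i <- r | P i) F i t).
Proof.
move=> hF; elim: r => [|a r IH].
  by apply: (pf_ext (f := fun _ => 1)); [move=> t; rewrite big_nil | exact: pf_const].
case: (boolP (P a)) => hP.
  by apply: (pf_ext _ (pf_mul (hF a) IH)) => t /=; rewrite big_cons hP.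
by apply: (pf_ext _ IH) => t; rewrite big_cons (negPf hP).
Qed.

Lemma pf_meval (R : realType) n (p : {mpoly R[i][n]}) (X : 'I_n -> R[i] -> R[i]) :
  (forall j, polyfun (X j)) -> polyfun (fun t => p.@[fun j => X j t]).
Proof.
move=> hX.
apply: (pf_ext (f := fun t => \sum_(m <- msupp p) p@_m * \prod_i X i t ^+ m i)).
  by move=> t; rewrite mevalE.
apply: pf_sum => m; apply: pf_mul; first exact: pf_const.
apply: pf_prod => j; exact: pf_exp.
Qed.

Lemma poly_ev0 (R : realType) (q : {poly R[i]}) : (forall t, q.[t] = 0) -> q = 0.
Proof.
move=> hq; apply/eqP/negPn/negP => nq.
pose rs := [seq (k%:R : R[i]) | k <- iota 0 (size q)].
have h1 : all (root q) rs by apply/allP => t _; apply/rootP.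
have h2 : uniq rs.
  rewrite map_inj_uniq ?iota_uniq // => m k /eqP; rewrite eqr_nat => /eqP.
  done.
by have := max_poly_roots nq h1 h2; rewrite size_map size_iota ltnn.
Qed.

Lemma pf_connect (R : realType) (F G : R[i] -> R[i]) :
  polyfun F -> polyfun G -> (forall t, F t * G t = 0) -> F 0 != 0 -> G 1 = 0.
Proof.
move=> [p hp] [q hq] hFG hF0.
have hpq : p * q = 0 by apply: poly_ev0 => t; rewrite hornerM -hp -hq.
move/eqP: hpq; rewrite mulf_eq0 => /orP [/eqP hp0|/eqP hq0].
  by move: hF0; rewrite hp hp0 horner0 eqxx.
by rewrite hq hq0 horner0.
Qed.

Lemma pf_sf (R : realType) (b : bool) (X Y : R[i] -> 'rV[R[i]]_4) k :
  (forall j, polyfun (fun t => X t 0 j)) -> (forall j, polyfun (fun t => Y t 0 j)) ->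
  polyfun (fun t => sf b (X t) (Y t) k).
Proof.
move=> hX hY; case: k => [|[|k]]; rewrite /sf /pl;
repeat first [ apply: pf_const | apply: hX | apply: hY | apply: pf_add | apply: pf_opp
             | apply: pf_mul ].
Qed.

Lemma SDn (R : realType) (b : bool) (x y : 'rV[R[i]]_4) :
  ~~ SD b x y -> exists k, sf b x y k != 0.
Proof.
rewrite /SD; case: (eqVneq (sf b x y 0) 0) => h0; last by exists 0%N.
case: (eqVneq (sf b x y 1) 0) => h1; last by exists 1%N.
case: (eqVneq (sf b x y 2) 0) => h2; last by exists 2%N.
by [].
Qed.

Lemma dich (R : realType) (G : 'I_4 -> {mpoly R[i][4]}) :
  (forall x : 'rV[R[i]]_4, in_cone x ->
     bform x (polymap_eval G x) = 0 /\
     bform (polymap_eval G x) (polymap_eval G x) = 0) ->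
  (forall x, in_cone x -> SD true x (polymap_eval G x)) \/
  (forall x, in_cone x -> SD false x (polymap_eval G x)).
Proof.
move=> hG.
case: (classic (forall x, in_cone x -> SD true x (polymap_eval G x))) => hT; [by left | right].
move=> x1 hx1; apply/negPn/negP => hn1; apply: hT => x0 hx0; apply/negPn/negP => hn0.
have [k hk] := SDn hn0; have [l hl] := SDn hn1.
have [u1 [u2 [v1 [v2 ex0]]]] := factor hx0.
have [u1' [u2' [v1' [v2' ex1]]]] := factor hx1.
pose Xc t := Xof (u1 + t * (u1' - u1)) (u2 + t * (u2' - u2))
                 (v1 + t * (v1' - v1)) (v2 + t * (v2' - v2)).
have hX0 : Xc 0 = x0 by rewrite /Xc !mul0r !addr0.
have e : forall a b : R[i], a + 1 * (b - a) = b by move=> a b; ring.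
have hX1 : Xc 1 = x1 by rewrite /Xc !e.
have Xent : forall j, polyfun (fun t => Xc t 0 j).
  move=> j; apply: (pf_ext (f := fun t => Xc t 0 j)) => //.
  rewrite /Xc /Xof.
  have [->|[->|[->|->]]] := ord4 j;
  (apply: (pf_ext (f := fun t => _)); [move=> t; rewrite mxE /=; reflexivity | ]);
  repeat first [ apply: pf_const | apply: pf_id | apply: pf_add | apply: pf_opp
               | apply: pf_mul ].
have Gent : forall j, polyfun (fun t => polymap_eval G (Xc t) 0 j).
  move=> j; apply: (pf_ext (f := fun t => (G j).@[fun i => Xc t 0 i])).
    by move=> t; rewrite mxE.
  exact: pf_meval.
have hF := pf_sf true k Xent Gent.
have hG' := pf_sf false l Xent Gent.
have hprod : forall t, sf true (Xc t) (polymap_eval G (Xc t)) k *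
                       sf false (Xc t) (polymap_eval G (Xc t)) l = 0.
  move=> t; have hc : in_cone (Xc t) by exact: Xof_cone.
  have [h1 h2] := hG _ hc; exact: prodA hc h2 h1 k l.
have := pf_connect hF hG' hprod; rewrite hX0 hX1 => /(_ hk) /eqP.
by rewrite (negPf hl).
Qed.

Theorem mainTheorem10 (R : realType) (d : nat) (G : 'I_4 -> {mpoly R[i][4]}) :
  (forall k : 'I_4, G k \is d.-homog) ->
  (forall x : 'rV[R[i]]_4, in_cone x ->
     bform x (polymap_eval G x) = 0 /\
     bform (polymap_eval G x) (polymap_eval G x) = 0) ->
  exists P0 : 'M[R[i]]_4, cone_plane P0 /\
    forall x : 'rV[R[i]]_4, x != 0 -> in_cone x ->
      forall W : 'M[R[i]]_4, gen_family P0 W -> (x <= W)%MS ->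
        (polymap_eval G x <= W)%MS.
Proof.
move=> _ hG.
have [h|h] := dich hG; [exists (P0 R true) | exists (P0 R false)];
  (split; first exact: cone_P0);
  move=> x hx0 hx W [hW hodd] hxW; have [h1 _] := hG x hx;
  exact: plane_main hW hxW hx0 h1 (h x hx) hodd.
Qed.
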